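(* Let $m,k\in\mathbb{Z}$, let $(H,\alpha)$ be a monoidal Hom-bialgebra and $(C,\beta)$ a monoidal Hom-algebra which is a left weak $(H,\alpha)$-Hom-module algebra via $h\otimes c\mapsto h\rightarrow c$ and a left $(H,\alpha)$-Hom-comodule coalgebra with coaction $c\mapsto c_{(-1)}\otimes c_{(0)}$; let $\sigma:H\otimes H\to C$ be a convolution invertible linear map. Let $X=C\otimes H$ with multiplication $(a\otimes h)(b\otimes g)=a[(\alpha^{m}(h_{11})\rightarrow\beta^{-2}(b))\sigma(\alpha^{k+1}(h_{12}),\alpha^{k}(g_{1}))]\otimes\alpha(h_{2}g_{2})$, unit $1_C\otimes1_H$, comultiplication $\Delta(a\otimes h)=a_{1}\otimes\alpha^{m}(a_{2(-1)})\alpha^{-1}(h_{1})\otimes\beta(a_{2(0)})\otimes h_{2}$, counit $\varepsilon(a)\varepsilon(h)$ and structure map $\xi=\beta\otimes\alpha$, and assume $(X,\xi)$ is a monoidal Hom-bialgebra. Define $\varphi^r:X\otimes H\to X$ by $$\varphi^{r}((a\otimes h)\otimes l)=a\,\sigma(\alpha^{k+1}(h_{1}),\alpha^{k+1-m}(l_{1}))\otimes\alpha(h_{2})\alpha^{1-m}(l_{2}),$$ and $\bar\sigma:H\otimes H\to X$ by $\bar\sigma(h\otimes l)=\sigma(\alpha^{k+1-m}(h),\alpha^{k+1-m}(l))\otimes1_H$. Then $(X,\xi,\varphi^r)$ is a right $(H,\alpha,\bar\sigma)$-Hom module, i.e. for all $l,g\in H$ and $x\in X$, $$\varphi^r(\varphi^r(x\otimes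 l)\otimes\alpha(g))=\xi(x)\,\varphi^r(\bar\sigma(l_1,g_1)\otimes l_2g_2)\quad\text{and}\quad\varphi^r(x\otimes1_H)=\xi(x),$$ where juxtaposition is the multiplication of $X$.
   Context: Field $k$; Sweedler notation. Monoidal Hom-algebra $(A,\beta)$: $\beta(a)(bc)=(ab)\beta(c)$, $\beta(ab)=\beta(a)\beta(b)$, $a1=1a=\beta(a)$, $\beta(1)=1$, $\beta$ a linear automorphism. Monoidal Hom-coalgebra $(C,\gamma)$: $\gamma^{-1}(c_1)\otimes\Delta(c_2)=\Delta(c_1)\otimes\gamma^{-1}(c_2)$, $\Delta\gamma=(\gamma\otimes\gamma)\Delta$, $c_1\varepsilon(c_2)=\gamma^{-1}(c)=\varepsilon(c_1)c_2$, $\varepsilon\gamma=\varepsilon$. Monoidal Hom-bialgebra: both with the same structure map and $\Delta,\varepsilon$ multiplicative and unital. Left weak $(H,\alpha)$-Hom-module algebra: $h\rightarrow(ab)=(h_1\rightarrow a)(h_2\rightarrow b)$, $h\rightarrow1=\varepsilon(h)1$. Left $(H,\alpha)$-Hom-comodule $(M,\mu)$: $\Delta_H(x_{(-1)})\otimes\mu^{-1}(x_{(0)})=\alpha^{-1}(x_{(-1)})\otimes x_{(0)(-1)}\otimes x_{(0)(0)}$, $\rho(\mu(x))=\alpha(x_{(-1)})\otimes\mu(x_{(0)})$, $\varepsilon(x_{(-1)})x_{(0)}=\mu^{-1}(x)$; Hom-comodule coalgebra: moreover $b_{(-1)}\otimes b_{(0)1}\otimes b_{(0)2}=b_{1(-1)}b_{2(-1)}\otimes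 b_{1(0)}\otimes b_{2(0)}$, $\varepsilon(b_{(0)})b_{(-1)}=\varepsilon(b)1_H$. $\sigma$ convolution invertible means there is a linear $\sigma^{-1}:H\otimes H\to C$ with $\sigma(h_1,l_1)\sigma^{-1}(h_2,l_2)=\varepsilon(h)\varepsilon(l)1_C=\sigma^{-1}(h_1,l_1)\sigma(h_2,l_2)$. *)

(* Defs.v *)
(* Vector spaces over a field K; tensor products are encoded
   as finite sums of pure tensors (seq of tuples) up to tensor equality,
   tested against all multilinear scalar functionals. *)
From HB Require Import structures.
From mathcomp Require Import all_boot all_order all_algebra.
Set Implicit Arguments. Unset Strict Implicit. Unset Printing Implicit Defensive.
Import GRing.Theory.
Local Open Scope ring_scope.

Definition zpow (T : Type) (f finv : T -> T) (m : int) : T -> T :=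
  match m with Posz n => iter n f | Negz n => iter n.+1 finv end.

(* A "space": a carrier with vector-space operations, an equality (equivalence)
   and its space of admissible (linear) scalar functionals. *)
Record space (K : fieldType) := Space {
  scar :> Type;
  szero : scar;
  sadd : scar -> scar -> scar;
  sscale : K -> scar -> scar;
  seqv : scar -> scar -> Prop;
  sdual : (scar -> K) -> Prop }.
Arguments szero {K} s.
Arguments sadd {K s}.
Arguments sscale {K s}.
Arguments seqv {K s}.
Arguments sdual {K} s.

Section Generic.
Variable K : fieldType.

Definition lmodSpace (V : lmodType K) : space K :=
  @Space K V 0 +%R *:%R (@eq V)
    (fun f => forall a x y, f (a *: x + y) = a * f x + f y).

Implicit Types A B D : space K.

Definition ssum A (s : seq A) : A := foldr sadd (szero A) s.

Definition slinear A B (f : A -> B) :=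
  [/\ forall x y, seqv (f (sadd x y)) (sadd (f x) (f y)),
      forall a x, seqv (f (sscale a x)) (sscale a (f x)) &
      forall x y, seqv x y -> seqv (f x) (f y)].

Definition sbilinear A B D (f : A -> B -> D) :=
  (forall b, slinear (f^~ b)) /\ (forall a, slinear (f a)).

Definition ml2 A B (phi : A -> B -> K) :=
  (forall b, sdual A (phi^~ b)) /\ (forall a, sdual B (phi a)).
Definition ml3 A B D (phi : A -> B -> D -> K) :=
  [/\ forall b d, sdual A (fun a => phi a b d),
      forall a d, sdual B (fun b => phi a b d) &
      forall a b, sdual D (fun d => phi a b d)].

Definition teq2 A B (t t' : seq (A * B)) :=
  forall phi, ml2 phi ->
    \sum_(p <- t) phi p.1 p.2 = \sum_(p <- t') phi p.1 p.2.
Definition teq3 A B D (t t' : seq (A * B * D)) :=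
  forall phi, ml3 phi ->
    \sum_(p <- t) phi p.1.1 p.1.2 p.2 = \sum_(p <- t') phi p.1.1 p.1.2 p.2.

Definition tlinear A B D (f : A -> seq (B * D)) :=
  [/\ forall x y, teq2 (f (sadd x y)) (f x ++ f y),
      forall a x, teq2 (f (sscale a x)) [seq (sscale a p.1, p.2) | p <- f x] &
      forall x y, seqv x y -> teq2 (f x) (f y)].

Definition linv A (g ginv : A -> A) :=
  [/\ slinear g, slinear ginv & forall x, seqv (g (ginv x)) x /\ seqv (ginv (g x)) x].

Definition HomAlg A (mul : A -> A -> A) (one : A) (g ginv : A -> A) :=
  [/\ sbilinear mul, linv g ginv,
      forall a b c, seqv (mul (g a) (mul b c)) (mul (mul a b) (g c)),
      forall a b, seqv (g (mul a b)) (mul (g a) (g b)) &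
      (forall a, seqv (mul a one) (g a) /\ seqv (mul one a) (g a)) /\ seqv (g one) one].

Definition HomCoalg A (g ginv : A -> A) (Delta : A -> seq (A * A)) (eps : A -> K) :=
  [/\ linv g ginv, tlinear Delta, sdual A eps,
      forall c, teq3 [seq (ginv p.1, q.1, q.2) | p <- Delta c, q <- Delta p.2]
                     [seq (q.1, q.2, ginv p.2) | p <- Delta c, q <- Delta p.1] &
      [/\ forall c, teq2 (Delta (g c)) [seq (g p.1, g p.2) | p <- Delta c],
          forall c, seqv (ssum [seq sscale (eps p.2) p.1 | p <- Delta c]) (ginv c),
          forall c, seqv (ssum [seq sscale (eps p.1) p.2 | p <- Delta c]) (ginv c) &
          forall c, eps (g c) = eps c]].

Definition HomBialg A (mul : A -> A -> A) (one : A) (g ginv : A -> A)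
    (Delta : A -> seq (A * A)) (eps : A -> K) :=
  [/\ HomAlg mul one g ginv, HomCoalg g ginv Delta eps,
      forall x y, teq2 (Delta (mul x y))
                       [seq (mul p.1 q.1, mul p.2 q.2) | p <- Delta x, q <- Delta y],
      teq2 (Delta one) [:: (one, one)] &
      (forall x y, eps (mul x y) = eps x * eps y) /\ eps one = 1].

Definition WeakHomModAlg (H C : lmodType K) (DeltaH : H -> seq (H * H)) (epsH : H -> K)
    (mulC : C -> C -> C) (oneC : C) (act : H -> C -> C) :=
  [/\ @sbilinear (lmodSpace H) (lmodSpace C) (lmodSpace C) act,
      forall h a b, act h (mulC a b) = \sum_(p <- DeltaH h) mulC (act p.1 a) (act p.2 b) &
      forall h, act h oneC = epsH h *: oneC].

Definition HomComod (H : space K) (M : space K) (alpha alphainv : H -> H)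
    (DeltaH : H -> seq (H * H)) (epsH : H -> K) (mu muinv : M -> M)
    (rho : M -> seq (H * M)) :=
  [/\ tlinear rho,
      forall x, teq3 [seq (q.1, q.2, muinv p.2) | p <- rho x, q <- DeltaH p.1]
                     [seq (alphainv p.1, q.1, q.2) | p <- rho x, q <- rho p.2],
      forall x, teq2 (rho (mu x)) [seq (alpha p.1, mu p.2) | p <- rho x] &
      forall x, seqv (ssum [seq sscale (epsH p.1) p.2 | p <- rho x]) (muinv x)].

Definition HomComodCoalg (H : space K) (C : space K) (alpha alphainv : H -> H)
    (mulH : H -> H -> H) (oneH : H) (DeltaH : H -> seq (H * H)) (epsH : H -> K)
    (beta betainv : C -> C) (DeltaC : C -> seq (C * C)) (epsC : C -> K)
    (rho : C -> seq (H * C)) :=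
  [/\ HomComod alpha alphainv DeltaH epsH beta betainv rho,
      forall b, teq3 [seq (p.1, q.1, q.2) | p <- rho b, q <- DeltaC p.2]
                     (flatten [seq [seq (mulH r.1 s.1, r.2, s.2)
                                   | r <- rho p.1, s <- rho p.2] | p <- DeltaC b]) &
      forall b, seqv (ssum [seq sscale (epsC p.2) p.1 | p <- rho b]) (sscale (epsC b) oneH)].

Definition ConvInv (H C : lmodType K) (DeltaH : H -> seq (H * H)) (epsH : H -> K)
    (mulC : C -> C -> C) (oneC : C) (sigma : H -> H -> C) :=
  @sbilinear (lmodSpace H) (lmodSpace H) (lmodSpace C) sigma /\
  exists sinv : H -> H -> C,
    [/\ @sbilinear (lmodSpace H) (lmodSpace H) (lmodSpace C) sinv,
        forall h l, \sum_(p <- DeltaH h) \sum_(q <- DeltaH l) mulC (sigma p.1 q.1) (sinv p.2 q.2)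
                    = (epsH h * epsH l) *: oneC &
        forall h l, \sum_(p <- DeltaH h) \sum_(q <- DeltaH l) mulC (sinv p.1 q.1) (sigma p.2 q.2)
                    = (epsH h * epsH l) *: oneC].

Definition Xspace (C H : lmodType K) : space K :=
  @Space K (seq (C * H)) [::] cat (fun a x => [seq (a *: p.1, p.2) | p <- x])
    (fun x y => forall phi, @ml2 (lmodSpace C) (lmodSpace H) phi ->
        \sum_(p <- x) phi p.1 p.2 = \sum_(p <- y) phi p.1 p.2)
    (fun f => exists phi, @ml2 (lmodSpace C) (lmodSpace H) phi /\
        forall x, f x = \sum_(p <- x) phi p.1 p.2).

End Generic.

Section Smash.
Variables (K : fieldType) (H C : lmodType K) (m k : int)
  (mulH : H -> H -> H) (oneH : H) (alpha alphainv : H -> H)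
  (DeltaH : H -> seq (H * H)) (epsH : H -> K)
  (mulC : C -> C -> C) (oneC : C) (beta betainv : C -> C)
  (DeltaC : C -> seq (C * C)) (epsC : C -> K)
  (act : H -> C -> C) (rho : C -> seq (H * C)) (sigma : H -> H -> C).

Local Notation al n := (zpow alpha alphainv n).
Local Notation be n := (zpow beta betainv n).
Local Notation X := (seq (C * H)).

Definition mulX_pure (u v : C * H) : X :=
  flatten [seq [seq (mulC u.1 (mulC (act (al m q.1) (be (-2) v.1))
                                     (sigma (al (k + 1) q.2) (al k r.1))),
                     alpha (mulH p.2 r.2))
               | q <- DeltaH p.1, r <- DeltaH v.2] | p <- DeltaH u.2].
Definition mulX (x y : X) : X := flatten [seq mulX_pure u v | u <- x, v <- y].
Definition oneX : X := [:: (oneC, oneH)].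
Definition DeltaX_pure (u : C * H) : seq (X * X) :=
  flatten [seq [seq ([:: (p.1, mulH (al m q.1) (alphainv r.1))], [:: (beta q.2, r.2)])
               | q <- rho p.2, r <- DeltaH u.2] | p <- DeltaC u.1].
Definition DeltaX (x : X) : seq (X * X) := flatten [seq DeltaX_pure u | u <- x].
Definition epsX (x : X) : K := \sum_(p <- x) epsC p.1 * epsH p.2.
Definition xi (x : X) : X := [seq (beta p.1, alpha p.2) | p <- x].
Definition xiinv (x : X) : X := [seq (betainv p.1, alphainv p.2) | p <- x].

Definition phir_pure (u : C * H) (l : H) : X :=
  [seq (mulC u.1 (sigma (al (k + 1) p.1) (al (k + 1 - m) q.1)),
        mulH (alpha p.2) (al (1 - m) q.2)) | p <- DeltaH u.2, q <- DeltaH l].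
Definition phir (x : X) (l : H) : X := flatten [seq phir_pure u l | u <- x].
Definition sigmabar (h l : H) : X :=
  [:: (sigma (al (k + 1 - m) h) (al (k + 1 - m) l), oneH)].

End Smash.

(* Main.v *)
Require Import Defs.
From mathcomp Require Import all_boot all_order all_algebra.
From mathcomp Require Import zify ring.
Set Implicit Arguments. Unset Strict Implicit. Unset Printing Implicit Defensive.
Import GRing.Theory.
Local Open Scope ring_scope.

Section Gen.
Variable K : fieldType.

Definition dl (V : lmodType K) (f : V -> K) := forall a x y, f (a *: x + y) = a * f x + f y.
Definition lin (V W : lmodType K) (f : V -> W) := forall a x y, f (a *: x + y) = a *: f x + f y.
Definition ml2' (V W : lmodType K) (phi : V -> W -> K) :=
  (forall b, dl (fun a => phi a b)) /\ (forall a, dl (phi a)).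

Section DL.
Variables (V W U : lmodType K).

Lemma dl0 (f : V -> K) : dl f -> f 0 = 0.
Proof.
move=> h; have := h 1 0 0; rewrite scale1r addr0 mul1r => /esym/eqP.
by rewrite -subr_eq0 addrK => /eqP.
Qed.
Lemma dlD (f : V -> K) : dl f -> forall x y, f (x + y) = f x + f y.
Proof. by move=> h x y; have := h 1 x y; rewrite scale1r mul1r. Qed.
Lemma dlZ (f : V -> K) : dl f -> forall a x, f (a *: x) = a * f x.
Proof. by move=> h a x; have := h a x 0; rewrite !addr0 dl0 // addr0. Qed.
Lemma dl_sum (f : V -> K) (I : Type) (s : seq I) (F : I -> V) : dl f ->
  f (\sum_(i <- s) F i) = \sum_(i <- s) f (F i).
Proof.
move=> h; elim: s => [|a s IH]; first by rewrite !big_nil dl0.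
by rewrite !big_cons dlD // IH.
Qed.

Lemma lin0 (f : V -> W) : lin f -> f 0 = 0.
Proof.
move=> h; have := h 1 0 0; rewrite !scale1r addr0 => /esym/eqP.
by rewrite -subr_eq0 addrK => /eqP.
Qed.
Lemma linD (f : V -> W) : lin f -> forall x y, f (x + y) = f x + f y.
Proof. by move=> h x y; have := h 1 x y; rewrite !scale1r. Qed.
Lemma linZ (f : V -> W) : lin f -> forall a x, f (a *: x) = a *: f x.
Proof. by move=> h a x; have := h a x 0; rewrite !addr0 lin0 // addr0. Qed.

Lemma slin_lin (f : V -> W) : @slinear K (lmodSpace V) (lmodSpace W) f -> lin f.
Proof. by case=> hD hZ _ a x y; rewrite /= hD hZ. Qed.

Lemma lin_id : lin (fun x : V => x). Proof. by []. Qed.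
Lemma dl_comp (f : W -> K) (g : V -> W) : dl f -> lin g -> dl (fun x => f (g x)).
Proof. by move=> hf hg a x y; rewrite hg hf. Qed.
Lemma lin_comp (f : W -> U) (g : V -> W) : lin f -> lin g -> lin (fun x => f (g x)).
Proof. by move=> hf hg a x y; rewrite hg hf. Qed.
Lemma dl_sumF (I : Type) (s : seq I) (F : I -> V -> K) :
  (forall i, dl (F i)) -> dl (fun x => \sum_(i <- s) F i x).
Proof.
move=> h a x y; rewrite mulr_sumr -big_split /=; apply: eq_bigr => i _; exact: h.
Qed.
Lemma dl_scal (c : K) (f : V -> K) : dl f -> dl (fun x => c * f x).
Proof. by move=> h a x y; rewrite h mulrDr mulrCA. Qed.

End DL.

Lemma ml2_sum (V W : lmodType K) (I : Type) (s : seq I) (F : I -> V -> W -> K) :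
  (forall i, ml2' (F i)) -> ml2' (fun x y => \sum_(i <- s) F i x y).
Proof.
move=> h; split=> c /=.
  by apply: dl_sumF => i; exact: (h i).1.
by apply: dl_sumF => i; exact: (h i).2.
Qed.

Lemma ssum_lmod (V : lmodType K) (s : seq V) : ssum (A := lmodSpace V) s = \sum_(x <- s) x.
Proof. by elim: s => [|a s IH]; rewrite ?big_nil ?big_cons //= -IH. Qed.

Section Zpow.
Variables (T : Type) (f finv : T -> T).
Hypotheses (fK : forall x, finv (f x) = x) (Kf : forall x, f (finv x) = x).
Local Notation zp := (zpow f finv).

Lemma zpowS n x : zp (n + 1) x = f (zp n x).
Proof.
case: n => [n|[|n]].
  by have -> : (n%:Z + 1 = n.+1%:Z)%R by lia.
  by rewrite /= Kf.
have -> : Negz n.+1 + 1 = Negz n by rewrite !NegzE; lia.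
by rewrite /= Kf.
Qed.
Lemma zpowN n x : zp (n - 1) x = finv (zp n x).
Proof.
case: n => [[|n]|n]; first by [].
  have -> : (n.+1%:Z - 1 = n%:Z)%R by lia.
  by rewrite /= fK.
have -> : Negz n - 1 = Negz n.+1 by rewrite !NegzE; lia.
by [].
Qed.
Lemma zpowD a b x : zp (a + b) x = zp a (zp b x).
Proof.
case: a => n; elim: n => [|n IH].
- by rewrite add0r.
- have -> : (n.+1%:Z + b = (n%:Z + b) + 1)%R by lia.
  by rewrite zpowS IH.
- have -> : Negz 0 + b = b - 1 by rewrite NegzE; lia.
  by rewrite zpowN.
- have -> : Negz n.+1 + b = (Negz n + b) - 1 by rewrite !NegzE; lia.
  by rewrite zpowN IH.
Qed.

Lemma zpow_stable (P : (T -> T) -> Prop) :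
  (forall g g', g =1 g' -> P g -> P g') -> P id ->
  (forall g, P g -> P (fun x => f (g x))) -> (forall g, P g -> P (fun x => finv (g x))) ->
  forall n, P (zp n).
Proof.
move=> ext Pid Pf Pfi [] n; elim: n => [|n IH] //=.
- by apply: ext (Pf _ IH) => x.
- by apply: (Pfi _ Pid).
- by apply: ext (Pfi _ IH) => x.
Qed.
End Zpow.

End Gen.

Section Main.
Variables (K : fieldType) (H C : lmodType K) (m k : int)
  (mulH : H -> H -> H) (oneH : H) (alpha alphainv : H -> H)
  (DeltaH : H -> seq (H * H)) (epsH : H -> K)
  (mulC : C -> C -> C) (oneC : C) (beta betainv : C -> C)
  (DeltaC : C -> seq (C * C)) (epsC : C -> K)
  (act : H -> C -> C) (rho : C -> seq (H * C)) (sigma : H -> H -> C).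
Hypothesis HH : @HomBialg K (lmodSpace H) mulH oneH alpha alphainv DeltaH epsH.
Hypothesis HC : @HomAlg K (lmodSpace C) mulC oneC beta betainv.
Hypothesis HW : WeakHomModAlg DeltaH epsH mulC oneC act.
Hypothesis HS : ConvInv DeltaH epsH mulC oneC sigma.
Hypothesis HX : @HomBialg K (Xspace C H)
     (mulX m k mulH alpha alphainv DeltaH mulC beta betainv act sigma)
     (oneX oneH oneC) (xi alpha beta) (xiinv alphainv betainv)
     (DeltaX m mulH alpha alphainv DeltaH beta DeltaC rho)
     (epsX epsH epsC).

Local Notation za n := (zpow alpha alphainv n).
Local Notation zb n := (zpow beta betainv n).
Local Notation M := (mulX m k mulH alpha alphainv DeltaH mulC beta betainv act sigma).
Local Notation Mp := (mulX_pure m k mulH alpha alphainv DeltaH mulC beta betainv act sigma).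
Local Notation phr := (phir m k mulH alpha alphainv DeltaH mulC sigma).
Local Notation xi := (xi alpha beta).

Lemma aK x : alphainv (alpha x) = x.
Proof. by case: HH => [[_ [_ _ h] _ _ _] _ _ _ _]; case: (h x). Qed.
Lemma Ka x : alpha (alphainv x) = x.
Proof. by case: HH => [[_ [_ _ h] _ _ _] _ _ _ _]; case: (h x). Qed.
Lemma lin_a (V : lmodType K) (g : V -> H) : lin g -> lin (fun y => alpha (g y)).
Proof.
case: HH => [[_ [h _ _] _ _ _] _ _ _ _] hg; apply: lin_comp hg; exact: slin_lin.
Qed.
Lemma lin_ai (V : lmodType K) (g : V -> H) : lin g -> lin (fun y => alphainv (g y)).
Proof.
case: HH => [[_ [_ h _] _ _ _] _ _ _ _] hg; apply: lin_comp hg; exact: slin_lin.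
Qed.
Lemma lin_za (V : lmodType K) n (g : V -> H) : lin g -> lin (fun y => za n (g y)).
Proof.
move=> hg; apply: lin_comp hg; move: n.
apply: (zpow_stable (P := fun f => lin f)).
- by move=> f f' e hf a x y; rewrite -!e.
- exact: lin_id.
- by move=> f; apply: lin_a.
- by move=> f; apply: lin_ai.
Qed.
Lemma lin_mH1 (V : lmodType K) b (g : V -> H) : lin g -> lin (fun y => mulH (g y) b).
Proof.
case: HH => [[[h _] _ _ _ _] _ _ _ _] hg.
by apply: (lin_comp (f := fun x => mulH x b)) hg; apply: slin_lin; apply: h.
Qed.
Lemma lin_mH2 (V : lmodType K) b (g : V -> H) : lin g -> lin (fun y => mulH b (g y)).
Proof.
case: HH => [[[_ h] _ _ _ _] _ _ _ _] hg.
by apply: (lin_comp (f := mulH b)) hg; apply: slin_lin; apply: h.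
Qed.
Lemma a_mul x y : alpha (mulH x y) = mulH (alpha x) (alpha y).
Proof. case: HH => [[_ _ _ h _] _ _ _ _]; exact: h. Qed.
Lemma ai_mul x y : alphainv (mulH x y) = mulH (alphainv x) (alphainv y).
Proof. by rewrite -{1}(Ka x) -{1}(Ka y) -a_mul aK. Qed.
Lemma za_mul n x y : za n (mulH x y) = mulH (za n x) (za n y).
Proof.
move: n x y; apply: (zpow_stable (P := fun f => forall x y, f (mulH x y) = mulH (f x) (f y))).
- by move=> f f' e hf x' y'; rewrite -!e.
- by [].
- by move=> f hf x' y'; rewrite hf a_mul.
- by move=> f hf x' y'; rewrite hf ai_mul.
Qed.
Lemma a1 : alpha oneH = oneH.
Proof. case: HH => [[_ _ _ _ [_ h]] _ _ _ _]; exact: h. Qed.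
Lemma ai1 : alphainv oneH = oneH.
Proof. by rewrite -{1}a1 aK. Qed.
Lemma za1 n : za n oneH = oneH.
Proof.
move: n; apply: (zpow_stable (P := fun f => f oneH = oneH)).
- by move=> f f' e hf; rewrite -e.
- by [].
- by move=> f hf; rewrite hf a1.
- by move=> f hf; rewrite hf ai1.
Qed.
Lemma mH1 x : mulH x oneH = alpha x.
Proof. by case: HH => [[_ _ _ _ [h _]] _ _ _ _]; case: (h x). Qed.
Lemma m1H x : mulH oneH x = alpha x.
Proof. by case: HH => [[_ _ _ _ [h _]] _ _ _ _]; case: (h x). Qed.
Lemma eps_dl : dl epsH.
Proof. case: HH => [_ [_ _ h _ _] _ _ _]; exact: h. Qed.
Lemma eps_a x : epsH (alpha x) = epsH x.
Proof. case: HH => [_ [_ _ _ _ [_ _ _ h]] _ _ _]; exact: h. Qed.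
Lemma eps_za n x : epsH (za n x) = epsH x.
Proof.
move: n x; apply: (zpow_stable (P := fun f => forall x, epsH (f x) = epsH x)).
- by move=> f f' e hf x; rewrite -e.
- by [].
- by move=> f hf x; rewrite eps_a.
- by move=> f hf x; rewrite -(hf x) -{2}(Ka (f x)) eps_a.
Qed.

Lemma ml2_comp (A B V W : lmodType K) (phi : V -> W -> K) (f : A -> V) (g : B -> W) :
  ml2' phi -> lin f -> lin g -> ml2' (fun x y => phi (f x) (g y)).
Proof.
by move=> [h1 h2] hf hg; split=> c; [apply: (dl_comp (h1 _)) | apply: (dl_comp (h2 _))].
Qed.

Lemma D_a (psi : H -> H -> K) c : ml2' psi ->
  \sum_(p <- DeltaH (alpha c)) psi p.1 p.2 = \sum_(p <- DeltaH c) psi (alpha p.1) (alpha p.2).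
Proof.
case: HH => [_ [_ _ _ _ [h _ _ _]] _ _ _] hpsi.
rewrite (h c psi hpsi) big_map //.
Qed.

Lemma D_ai (psi : H -> H -> K) c : ml2' psi ->
  \sum_(p <- DeltaH (alphainv c)) psi p.1 p.2 = \sum_(p <- DeltaH c) psi (alphainv p.1) (alphainv p.2).
Proof.
move=> hp; rewrite -{2}(Ka c) (D_a _ (psi := fun x y => psi (alphainv x) (alphainv y))).
  by apply: eq_bigr => p _; rewrite !aK.
by apply: ml2_comp => //; apply: lin_ai; apply: lin_id.
Qed.

Lemma D_za n (psi : H -> H -> K) c : ml2' psi ->
  \sum_(p <- DeltaH (za n c)) psi p.1 p.2 = \sum_(p <- DeltaH c) psi (za n p.1) (za n p.2).
Proof.
move: n psi c.
apply: (zpow_stable (P := fun f => forall (psi : H -> H -> K) c, ml2' psi ->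
  \sum_(p <- DeltaH (f c)) psi p.1 p.2 = \sum_(p <- DeltaH c) psi (f p.1) (f p.2))).
- move=> f f' e hf psi c hp; rewrite -e hf //; apply: eq_bigr => p _; by rewrite !e.
- by [].
- move=> f hf psi c hp; rewrite D_a // (hf (fun x y => psi (alpha x) (alpha y))) //.
  by apply: ml2_comp => //; apply: lin_a; apply: lin_id.
- move=> f hf psi c hp; rewrite D_ai // (hf (fun x y => psi (alphainv x) (alphainv y))) //.
  by apply: ml2_comp => //; apply: lin_ai; apply: lin_id.
Qed.

Lemma cuL_dl (F : H -> K) c : dl F ->
  \sum_(q <- DeltaH c) epsH q.1 * F q.2 = F (alphainv c).
Proof.
case: HH => [_ [_ _ _ _ [_ _ h _]] _ _ _] hF.
by rewrite -h /= ssum_lmod big_map dl_sum //; apply: eq_bigr => q _; rewrite dlZ.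
Qed.
Lemma cuR_dl (F : H -> K) c : dl F ->
  \sum_(q <- DeltaH c) epsH q.2 * F q.1 = F (alphainv c).
Proof.
case: HH => [_ [_ _ _ _ [_ h _ _]] _ _ _] hF.
by rewrite -h /= ssum_lmod big_map dl_sum //; apply: eq_bigr => q _; rewrite dlZ.
Qed.
Lemma D1 (psi : H -> H -> K) : ml2' psi ->
  \sum_(p <- DeltaH oneH) psi p.1 p.2 = psi oneH oneH.
Proof. by case: HH => [_ _ _ h _] hp; rewrite (h psi hp) big_seq1. Qed.

Lemma bK x : betainv (beta x) = x.
Proof. by case: HC => [_ [_ _ h] _ _ _]; case: (h x). Qed.
Lemma Kb x : beta (betainv x) = x.
Proof. by case: HC => [_ [_ _ h] _ _ _]; case: (h x). Qed.
Lemma lin_b (V : lmodType K) (g : V -> C) : lin g -> lin (fun y => beta (g y)).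
Proof.
case: HC => [_ [h _ _] _ _ _] hg; apply: (lin_comp (f := beta)) hg; exact: slin_lin.
Qed.
Lemma lin_bi (V : lmodType K) (g : V -> C) : lin g -> lin (fun y => betainv (g y)).
Proof.
case: HC => [_ [_ h _] _ _ _] hg; apply: (lin_comp (f := betainv)) hg; exact: slin_lin.
Qed.
Lemma lin_mC1 (V : lmodType K) b (g : V -> C) : lin g -> lin (fun y => mulC (g y) b).
Proof.
case: HC => [[h _] _ _ _ _] hg.
by apply: (lin_comp (f := fun x => mulC x b)) hg; apply: slin_lin; apply: h.
Qed.
Lemma lin_mC2 (V : lmodType K) b (g : V -> C) : lin g -> lin (fun y => mulC b (g y)).
Proof.
case: HC => [[_ h] _ _ _ _] hg.
by apply: (lin_comp (f := mulC b)) hg; apply: slin_lin; apply: h.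
Qed.
Lemma b_mul x y : beta (mulC x y) = mulC (beta x) (beta y).
Proof. case: HC => [_ _ _ h _]; exact: h. Qed.
Lemma bi_mul x y : betainv (mulC x y) = mulC (betainv x) (betainv y).
Proof. by rewrite -{1}(Kb x) -{1}(Kb y) -b_mul bK. Qed.
Lemma b1 : beta oneC = oneC.
Proof. case: HC => [_ _ _ _ [_ h]]; exact: h. Qed.
Lemma bi1 : betainv oneC = oneC.
Proof. by rewrite -{1}b1 bK. Qed.
Lemma mC1 x : mulC x oneC = beta x.
Proof. by case: HC => [_ _ _ _ [h _]]; case: (h x). Qed.
Lemma m1C x : mulC oneC x = beta x.
Proof. by case: HC => [_ _ _ _ [h _]]; case: (h x). Qed.
Lemma act_one h : act h oneC = epsH h *: oneC.
Proof. case: HW => [_ _ e]; exact: e. Qed.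
Lemma lin_s1 (V : lmodType K) w (g : V -> H) : lin g -> lin (fun y => sigma (g y) w).
Proof.
case: HS => [[h _] _] hg.
by apply: (lin_comp (f := fun x => sigma x w)) hg; apply: slin_lin; apply: h.
Qed.
Lemma lin_s2 (V : lmodType K) w (g : V -> H) : lin g -> lin (fun y => sigma w (g y)).
Proof.
case: HS => [[_ h] _] hg.
by apply: (lin_comp (f := sigma w)) hg; apply: slin_lin; apply: h.
Qed.

Lemma dl_phi1 (V : lmodType K) (phi : C -> H -> K) h (g : V -> C) :
  ml2' phi -> lin g -> dl (fun y => phi (g y) h).
Proof. by move=> [h1 _] hg; apply: (dl_comp (f := fun c => phi c h)). Qed.
Lemma dl_phi2 (V : lmodType K) (phi : C -> H -> K) c (g : V -> H) :
  ml2' phi -> lin g -> dl (fun y => phi c (g y)).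
Proof. by move=> [_ h2] hg; apply: (dl_comp (f := phi c)). Qed.

Ltac lsolve := repeat first
  [ assumption | apply: lin_id
  | apply: lin_a | apply: lin_ai | apply: lin_za
  | apply: lin_mH1 | apply: lin_mH2
  | apply: lin_b | apply: lin_bi | apply: lin_mC2 | apply: lin_mC1
  | apply: lin_s1 | apply: lin_s2 ].
Ltac dsolve := repeat first
  [ apply: dl_sumF => ?
  | apply: dl_phi1; [assumption|]; lsolve
  | apply: dl_phi2; [assumption|]; lsolve ].
Ltac msolve := split => ? /=; dsolve.


Definition sumX (phi : C -> H -> K) (x : seq (C * H)) := \sum_(p <- x) phi p.1 p.2.
Definition seqvX (x y : seq (C * H)) := forall phi, ml2' phi -> sumX phi x = sumX phi y.

Lemma sumX_cat phi x y : sumX phi (x ++ y) = sumX phi x + sumX phi y.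
Proof. by rewrite /sumX big_cat. Qed.
Lemma sumX_flatten phi (s : seq (seq (C * H))) :
  sumX phi (flatten s) = \sum_(x <- s) sumX phi x.
Proof. by rewrite /sumX big_flatten. Qed.
Lemma sumX_M phi x y : sumX phi (M x y) = \sum_(u <- x) \sum_(v <- y) sumX phi (Mp u v).
Proof. by rewrite /mulX sumX_flatten big_allpairs_dep. Qed.
Lemma sumX_phr phi x l : sumX phi (phr x l) =
  \sum_(u <- x) sumX phi (phir_pure m k mulH alpha alphainv DeltaH mulC sigma u l).
Proof. by rewrite /phir sumX_flatten big_map. Qed.
Lemma sumX_xi phi x : sumX phi (xi x) = sumX (fun c h => phi (beta c) (alpha h)) x.
Proof. by rewrite /sumX /Defs.xi big_map. Qed.

Lemma sumX_Mp phi a h b g : sumX phi (Mp (a, h) (b, g)) =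
  \sum_(p <- DeltaH h) \sum_(q <- DeltaH p.1) \sum_(r <- DeltaH g)
     phi (mulC a (mulC (act (za m q.1) (zb (-2) b)) (sigma (za (k + 1) q.2) (za k r.1))))
         (alpha (mulH p.2 r.2)).
Proof.
rewrite /mulX_pure sumX_flatten big_map; apply: eq_bigr => p _.
by rewrite /sumX big_allpairs_dep.
Qed.

Lemma sumX_phrp phi a h l :
  sumX phi (phir_pure m k mulH alpha alphainv DeltaH mulC sigma (a, h) l) =
  \sum_(p <- DeltaH h) \sum_(q <- DeltaH l)
     phi (mulC a (sigma (za (k + 1) p.1) (za (k + 1 - m) q.1)))
         (mulH (alpha p.2) (za (1 - m) q.2)).
Proof. by rewrite /phir_pure /sumX big_allpairs_dep. Qed.

Lemma X_assoc x y z : seqvX (M (xi x) (M y z)) (M (M x y) (xi z)).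
Proof. case: HX => [[_ _ h _ _] _ _ _ _] phi hp; exact: (h x y z phi hp). Qed.
Lemma X_unitR x : seqvX (M x (oneX oneH oneC)) (xi x).
Proof. case: HX => [[_ _ _ _ [h _]] _ _ _ _] phi hp; exact: ((h x).1 phi hp). Qed.
Lemma X_unitL x : seqvX (M (oneX oneH oneC) x) (xi x).
Proof. case: HX => [[_ _ _ _ [h _]] _ _ _ _] phi hp; exact: ((h x).2 phi hp). Qed.
Lemma X_mul x y : seqvX (xi (M x y)) (M (xi x) (xi y)).
Proof. case: HX => [[_ _ _ h _] _ _ _ _] phi hp; exact: (h x y phi hp). Qed.
Lemma X_resp1 b x y : seqvX x y -> seqvX (M x b) (M y b).
Proof.
case: HX => [[[h _] _ _ _ _] _ _ _ _] e phi hp.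
by case: (h b) => _ _ /(_ x y e); apply.
Qed.
Lemma X_resp2 b x y : seqvX x y -> seqvX (M b x) (M b y).
Proof.
case: HX => [[[_ h] _ _ _ _] _ _ _ _] e phi hp.
by case: (h b) => _ _ /(_ x y e); apply.
Qed.

Lemma zaD a b x : za a (za b x) = za (a + b) x.
Proof. by rewrite (zpowD aK Ka). Qed.
Lemma zbD a b x : zb a (zb b x) = zb (a + b) x.
Proof. by rewrite (zpowD bK Kb). Qed.
Lemma za_1 x : alpha x = za 1 x. Proof. by []. Qed.
Lemma za_m1 x : alphainv x = za (-1) x. Proof. by []. Qed.
Lemma za0 x : za 0 x = x. Proof. by []. Qed.

Lemma mC_Zl a x y : mulC (a *: x) y = a *: mulC x y.
Proof. exact: (linZ (lin_mC1 y (@lin_id _ C))). Qed.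
Lemma mC_Zr a x y : mulC x (a *: y) = a *: mulC x y.
Proof. exact: (linZ (lin_mC2 x (@lin_id _ C))). Qed.
Lemma phi_Zl (phi : C -> H -> K) a c h : ml2' phi -> phi (a *: c) h = a * phi c h.
Proof. by move=> [h1 _]; exact: (dlZ (h1 h)). Qed.

Lemma MU phi a h g : ml2' phi ->
  sumX phi (Mp (a, h) (oneC, g)) =
  \sum_(p <- DeltaH h) \sum_(r <- DeltaH g)
     phi (mulC a (beta (sigma (za k p.1) (za k r.1)))) (alpha (mulH p.2 r.2)).
Proof.
move=> hp; rewrite sumX_Mp; apply: eq_bigr => p _.
have e2 : zb (-2) oneC = oneC.
  by have -> : zb (-2) oneC = betainv (betainv oneC) by []; rewrite !bi1.
under eq_bigr => q _ do under eq_bigr => r _ do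
  rewrite e2 act_one eps_za mC_Zl m1C mC_Zr phi_Zl //.
under eq_bigr => q _ do rewrite -mulr_sumr.
rewrite (cuL_dl (F := fun y => \sum_(r <- DeltaH g)
   phi (mulC a (beta (sigma (za (k + 1) y) (za k r.1)))) (alpha (mulH p.2 r.2)))).
  by apply: eq_bigr => r _; rewrite za_m1 zaD; have -> : k + 1 + -1 = k by lia.
dsolve.
Qed.

Lemma ml2_phi_map (phi : C -> H -> K) (f : C -> C) (g : H -> H) :
  ml2' phi -> lin f -> lin g -> ml2' (fun c h => phi (f c) (g h)).
Proof. move=> hp hf hg; exact: ml2_comp. Qed.

Lemma za_m2 y : za (-2) y = alphainv (alphainv y). Proof. by []. Qed.

Lemma FS psi a h g : ml2' psi ->
  \sum_(p <- DeltaH h) \sum_(r <- DeltaH g)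
     psi (mulC a (beta (sigma (za k p.1) (za k r.1)))) (mulH p.2 r.2) =
  \sum_(p <- DeltaH h) \sum_(r <- DeltaH g)
     psi (mulC a (sigma (za (k + 1) p.1) (za (k + 1) r.1))) (mulH p.2 r.2).
Proof.
move=> hpsi.
pose phi := fun c h' => psi (betainv c) (za (-2) h').
have hphi : ml2' phi by apply: ml2_phi_map => //; lsolve.
have := X_mul [:: (a, h)] [:: (oneC, g)] hphi.
rewrite sumX_xi /= b1 !sumX_M !big_seq1 MU; last first.
  by apply: ml2_phi_map => //; lsolve.
rewrite MU // => E.
have E1 : forall s p r, phi (beta (mulC a (beta s))) (alpha (alpha (mulH p r))) =
   psi (mulC a (beta s)) (mulH p r).
  by move=> s p r; rewrite /phi bK za_m2 !aK.
under eq_bigr => p _ do under eq_bigr => r _ do rewrite -E1.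
rewrite E.
rewrite (D_a (psi := fun x y => \sum_(r <- DeltaH (alpha g))
    phi (mulC (beta a) (beta (sigma (za k x) (za k r.1)))) (alpha (mulH y r.2)))); last first.
  by msolve.
apply: eq_bigr => p _.
rewrite (D_a (psi := fun x y => 
    phi (mulC (beta a) (beta (sigma (za k (alpha p.1)) (za k x)))) (alpha (mulH (alpha p.2) y)))); last first.
  by msolve.
apply: eq_bigr => r _.
rewrite /phi -b_mul bK -a_mul za_m2 !aK.
by rewrite (za_1 p.1) (za_1 r.1) !zaD.
Qed.

Lemma L1p phi a h l : ml2' phi ->
  sumX phi (phir_pure m k mulH alpha alphainv DeltaH mulC sigma (a, h) l) =
  sumX phi (Mp (a, h) (oneC, za (-m) l)).
Proof.
move=> hp; rewrite sumX_phrp MU //.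
rewrite (@FS (fun c hh => phi c (alpha hh))); last first.
  by apply: ml2_phi_map => //; lsolve.
apply: eq_bigr => p _.
rewrite (D_za (-m) (psi := fun x y => phi (mulC a (sigma (za (k + 1) p.1) (za (k + 1) x)))
   (alpha (mulH p.2 y)))); last by msolve.
by apply: eq_bigr => q _; rewrite a_mul (za_1 (za _ _)) !zaD.
Qed.

Lemma L1 x l : seqvX (phr x l) (M x [:: (oneC, za (-m) l)]).
Proof.
move=> phi hp; rewrite sumX_phr sumX_M; apply: eq_bigr => [[a h]] _.
by rewrite big_seq1 L1p.
Qed.

Lemma goal2 x : seqvX (phr x oneH) (xi x).
Proof. by move=> phi hp; rewrite L1 // za1 X_unitR. Qed.

Lemma LU phi g : ml2' phi ->
  \sum_(r <- DeltaH g) phi (mulC oneC (beta (sigma oneH (za k r.1)))) (alpha (alpha r.2))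
  = phi oneC (alpha g).
Proof.
move=> hp; have := X_unitL [:: (oneC, g)] hp.
rewrite sumX_M !big_seq1 MU // /sumX /= big_seq1 b1 => <-.
rewrite (D1 (psi := fun x y => \sum_(r <- DeltaH g)
   phi (mulC oneC (beta (sigma (za k x) (za k r.1)))) (alpha (mulH y r.2)))); last by msolve.
by apply: eq_bigr => r _; rewrite za1 m1H.
Qed.

Lemma core l g :
  seqvX (M [:: (oneC, za (-m) l)] [:: (oneC, za (-m) g)])
        (flatten [seq phr (sigmabar m k oneH alpha alphainv sigma p.1 q.1) (mulH p.2 q.2)
                 | p <- DeltaH l, q <- DeltaH g]).
Proof.
move=> phi hp.
rewrite sumX_M !big_seq1 MU //.
rewrite (@FS (fun c hh => phi c (alpha hh))); last first.
  by apply: ml2_phi_map => //; lsolve.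
rewrite (D_za (-m) (psi := fun x y => \sum_(r <- DeltaH (za (- m) g))
   phi (mulC oneC (sigma (za (k + 1) x) (za (k + 1) r.1))) (alpha (mulH y r.2)))); last by msolve.
rewrite sumX_flatten big_allpairs_dep.
apply: eq_bigr => p _.
rewrite (D_za (-m) (psi := fun x y =>
   phi (mulC oneC (sigma (za (k + 1) (za (- m) p.1)) (za (k + 1) x)))
       (alpha (mulH (za (- m) p.2) y)))); last by msolve.
apply: eq_bigr => q _.
rewrite sumX_phr big_seq1 /sigmabar L1p // MU //.
rewrite (D1 (psi := fun x y => \sum_(r <- DeltaH (za (- m) (mulH p.2 q.2)))
   phi (mulC (sigma (za (k + 1 - m) p.1) (za (k + 1 - m) q.1))
      (beta (sigma (za k x) (za k r.1)))) (alpha (mulH y r.2)))); last by msolve.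
set s := sigma (za (k + 1 - m) p.1) (za (k + 1 - m) q.1).
rewrite (eq_bigr (fun r => (fun c hh => phi (mulC s (betainv c)) hh)
   (mulC oneC (beta (sigma oneH (za k r.1)))) (alpha (alpha r.2)))); last first.
  by move=> r _; rewrite za1 m1H m1C bK.
rewrite (LU (za (- m) (mulH p.2 q.2)) (phi := fun c hh => phi (mulC s (betainv c)) hh)); last first.
  by apply: ml2_phi_map => //; lsolve.
rewrite bi1 mC1 m1C !zaD -za_mul /s.
by rewrite (za_1 (za _ _)) zaD.
Qed.

Lemma M_flat phi y (s1 s2 : seq (H * H)) (F : H * H -> H * H -> seq (C * H)) :
  sumX phi (flatten [seq M y (F p q) | p <- s1, q <- s2]) =
  sumX phi (M y (flatten [seq F p q | p <- s1, q <- s2])).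
Proof.
rewrite sumX_flatten big_allpairs_dep sumX_M.
rewrite (eq_bigr (fun u => \sum_(p <- s1) \sum_(q <- s2) \sum_(v <- F p q) sumX phi (Mp u v)));
  last by move=> u _; rewrite big_flatten big_allpairs_dep.
rewrite [RHS]exchange_big; apply: eq_bigr => p _.
rewrite [RHS]exchange_big; apply: eq_bigr => q _.
by rewrite sumX_M.
Qed.

Lemma goal1 l g x :
  seqvX (phr (phr x l) (alpha g))
    (flatten [seq M (xi x) (phr (sigmabar m k oneH alpha alphainv sigma p.1 q.1) (mulH p.2 q.2))
             | p <- DeltaH l, q <- DeltaH g]).
Proof.
move=> phi hp.
rewrite M_flat L1 // (X_resp1 _ (L1 x l)) //.
have -> : [:: (oneC, za (-m) (alpha g))] = xi [:: (oneC, za (-m) g)].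
  by rewrite /= b1 (za_1 g) (za_1 (za (-m) g)) !zaD addrC.
by rewrite -X_assoc // (X_resp2 _ (core l g)).
Qed.
End Main.

Unset Implicit Arguments.
Set Strict Implicit.

Theorem lemma4p8 (K : fieldType) (H C : lmodType K) (m k : int)
  (mulH : H -> H -> H) (oneH : H) (alpha alphainv : H -> H)
  (DeltaH : H -> seq (H * H)) (epsH : H -> K)
  (mulC : C -> C -> C) (oneC : C) (beta betainv : C -> C)
  (DeltaC : C -> seq (C * C)) (epsC : C -> K)
  (act : H -> C -> C) (rho : C -> seq (H * C)) (sigma : H -> H -> C) :
  @HomBialg K (lmodSpace H) mulH oneH alpha alphainv DeltaH epsH ->
  @HomAlg K (lmodSpace C) mulC oneC beta betainv ->
  WeakHomModAlg DeltaH epsH mulC oneC act ->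
  @HomCoalg K (lmodSpace C) beta betainv DeltaC epsC ->
  @HomComodCoalg K (lmodSpace H) (lmodSpace C) alpha alphainv mulH oneH DeltaH epsH
     beta betainv DeltaC epsC rho ->
  ConvInv DeltaH epsH mulC oneC sigma ->
  @HomBialg K (Xspace C H)
     (mulX m k mulH alpha alphainv DeltaH mulC beta betainv act sigma)
     (oneX oneH oneC) (xi alpha beta) (xiinv alphainv betainv)
     (DeltaX m mulH alpha alphainv DeltaH beta DeltaC rho)
     (epsX epsH epsC) ->
  (forall (l g : H) (x : seq (C * H)),
     @seqv K (Xspace C H)
       (phir m k mulH alpha alphainv DeltaH mulC sigma
          (phir m k mulH alpha alphainv DeltaH mulC sigma x l) (alpha g))
       (flatten [seq mulX m k mulH alpha alphainv DeltaH mulC beta betainv act sigma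
                   (xi alpha beta x)
                   (phir m k mulH alpha alphainv DeltaH mulC sigma
                      (sigmabar m k oneH alpha alphainv sigma p.1 q.1) (mulH p.2 q.2))
                 | p <- DeltaH l, q <- DeltaH g])) /\
  (forall x : seq (C * H),
     @seqv K (Xspace C H)
       (phir m k mulH alpha alphainv DeltaH mulC sigma x oneH) (xi alpha beta x)).
Proof.
move=> HH HC HW _ _ HS HX; split.
  move=> l g x; exact: (goal1 HH HC HW HS HX l g x).
move=> x; exact: (goal2 HH HC HW HS HX x).
Qed.
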